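(* Let $\rho:\mathfrak k\to\operatorname{End}(L^s)$ be a generalized spin representation of the maximal compact subalgebra $\mathfrak k$ of a simply laced Kac--Moody algebra over a field $F$ of characteristic $0$ with diagram $D=(V,E)$, and put $A_i:=2I\cdot\rho(X_i)$. Let $W=\langle s_1,\dots,s_n\mid (s_is_j)^{m_{ij}}=1\rangle$ with $m_{ii}=1$, $m_{ij}=2$ if $i\ne j$ and $\{v_i,v_j\}\notin E$, and $m_{ij}=4$ if $\{v_i,v_j\}\in E$. Then $s_i\mapsto A_i$ extends to a group homomorphism $W\to\mathrm{GL}_s(L)$.
   Context: $L=F(I)$ with $I^2=-1$. $X_1,\dots,X_n$ are the Berman generators of $\mathfrak k$: $\mathfrak k$ is the Lie algebra generated by $X_i=e_i-f_i$ with defining relations $[X_i,[X_i,X_j]]=-X_j$ for adjacent $v_i,v_j$ and $[X_i,X_j]=0$ for non-adjacent $i\neq j$. A generalized spin representation is a Lie algebra homomorphism $\rho:\mathfrak k\to\operatorname{End}(L^s)$ with $\rho(X_i)^2=-\tfrac14\mathrm{id}_s$ for all $i$. *)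

(* Defs.v *)
From HB Require Import structures.
From mathcomp Require Import all_boot all_order all_algebra all_field.
Set Implicit Arguments. Unset Strict Implicit. Unset Printing Implicit Defensive.
Import Order.TTheory GRing.Theory Num.Theory.
Local Open Scope ring_scope.

Definition lie_br (R : comNzRingType) (s : nat) (A B : 'M[R]_s) : 'M[R]_s :=
  A *m B - B *m A.

(* Matrix power A^k computed with *m (works for every s, including s = 0). *)
Definition mxpow (R : comNzRingType) (s : nat) (A : 'M[R]_s) (k : nat) : 'M[R]_s :=
  iter k (mulmx A) 1%:M.

Definition simple_graph (n : nat) (e : rel 'I_n) : Prop :=
  symmetric e /\ irreflexive e.

(* Since k is defined by the
   generators X_i and the given defining relations, a Lie algebra homomorphism
   rho : k -> End(L^s) is the same as a family of endomorphisms satisfying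
   these relations (universal property of the presentation). *)
Definition gen_spin_rep (R : fieldType) (n s : nat) (e : rel 'I_n)
    (X : 'I_n -> 'M[R]_s) : Prop :=
  [/\ (forall i j, e i j ->
         lie_br (X i) (lie_br (X i) (X j)) = - X j),
      (forall i j, i != j -> ~~ e i j -> lie_br (X i) (X j) = 0)
    & (forall i, X i *m X i = - ((4%:R : R)^-1) *: (1%:M : 'M[R]_s))].

Definition cox_m (n : nat) (e : rel 'I_n) (i j : 'I_n) : nat :=
  if i == j then 1%N else if e i j then 4%N else 2%N.

(* s_i |-> A_i extends to a group homomorphism
   W = < s_1..s_n | (s_i s_j)^{m_ij} = 1 > -> GL_s(L)
   (von Dyck: the A_i are invertible and satisfy the defining relations). *)
Definition extends_to_W_hom (R : fieldType) (n s : nat) (e : rel 'I_n)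
    (A : 'I_n -> 'M[R]_s) : Prop :=
  (forall i, A i \in unitmx) /\
  (forall i j, mxpow (A i *m A j) (cox_m e i j) = 1%:M).

(* Main.v *)
Set Warnings "-notation-overridden,-ambiguous-paths".
Require Import Defs.
From HB Require Import structures.
From mathcomp Require Import all_boot all_order all_algebra all_field.
From mathcomp Require Import ring.
Import Order.TTheory GRing.Theory Num.Theory.
Local Open Scope ring_scope.

Theorem mainTheorem6
  (F : fieldType) (charF0 : [pchar F] =i pred0)
  (L : fieldExtType F) (I : L) (hI : I ^+ 2 = -1)
  (hL : (<<1%VS; I>>)%AS = fullv :> {vspace L})
  (n : nat) (e : rel 'I_n) (hD : simple_graph e)
  (s : nat) (X : 'I_n -> 'M[L]_s) (hrho : gen_spin_rep e X) :
  extends_to_W_hom e (fun i => (2%:R * I) *: X i).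
Proof.
have h2 : (2%:R : L) != 0.
  apply/negP => /eqP h.
  have : (2%N \in [pchar L]) by rewrite inE /= h eqxx.
  by rewrite pchar_lalg charF0.
have h4 : (4%:R : L) != 0.
  have -> : (4%:R : L) = 2%:R * 2%:R by rewrite -natrM.
  by rewrite mulf_neq0.
case: hrho => Hadj Hnadj Hsq.
set c := 2%:R * I.
have hc : c * c = - 4%:R.
  rewrite /c mulrACA -(expr2 I) hI -natrM mulrN1 //.
have Hsq' : forall i, (c *: X i) *m (c *: X i) = 1%:M.
  by move=> i; rewrite -scalemxAl -scalemxAr scalerA Hsq scalerA hc mulrNN divff // scale1r.
rewrite /extends_to_W_hom; split; [move=> i | move=> i j].
  exact: (mulmx1_unit (Hsq' i)).1.
rewrite /cox_m.
case: (eqVneq i j) => [->|ij]; first by rewrite /mxpow /= mulmx1 Hsq'.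
have hM : (c *: X i) *m (c *: X j) = (c * c) *: (X i *m X j).
  by rewrite -scalemxAl -scalemxAr scalerA.
have hp4 : forall M : 'M[L]_s, mxpow M 4 = (M *m M) *m (M *m M).
  by move=> M; rewrite /mxpow /= mulmx1 !mulmxA.
have hp2 : forall M : 'M[L]_s, mxpow M 2 = M *m M.
  by move=> M; rewrite /mxpow /= mulmx1.
have f1 : X i *m X i *m X j = - 4%:R^-1 *: X j by rewrite Hsq -scalemxAl mul1mx.
have f2 : X j *m X i *m X i = - 4%:R^-1 *: X j by rewrite -mulmxA Hsq -scalemxAr mulmx1.
have f3 : X i *m X j *m X j = - 4%:R^-1 *: X i by rewrite -mulmxA Hsq -scalemxAr mulmx1.
case: ifP => eij.
- have key : X i *m X j *m X i = (4%:R)^-1 *: X j.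
    have := Hadj i j eij; rewrite /lie_br !mulmxBr !mulmxBl !mulmxA f1 f2.
    move: (X i *m X j *m X i) => P H.
    apply/matrixP => k l.
    have := congr1 (fun M : 'M[L]_s => M k l) H; rewrite !mxE.
    move: (P k l) (X j k l) => p x Hk.
    have E : p - 4%:R^-1 * x = - 2%:R^-1 * ((- 4%:R^-1 * x - p - (p - - 4%:R^-1 * x)) - - x).
      by field; rewrite h4 h2.
    by apply/eqP; rewrite -subr_eq0 E Hk subrr mulr0.
  have MM : ((c *: X i) *m (c *: X j)) *m ((c *: X i) *m (c *: X j)) = - 1%:M.
    rewrite hM -scalemxAl -scalemxAr scalerA !mulmxA key -scalemxAl Hsq.
    rewrite !scalerA hc -[- 1%:M]scaleN1r; congr (_ *: _).
    by field; rewrite h4.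
  by rewrite hp4 MM mulmxN mulNmx opprK mulmx1.
- have comm : X j *m X i = X i *m X j.
    have := Hnadj i j ij (negbT eij); rewrite /lie_br => /eqP.
    by rewrite subr_eq0 => /eqP ->.
  rewrite hp2 hM -scalemxAl -scalemxAr scalerA !mulmxA -(mulmxA (X i) (X j)) comm.
  rewrite mulmxA f1 -scalemxAl Hsq !scalerA hc.
  have -> : (-4%:R * -4%:R * - 4%:R^-1 * - 4%:R^-1 : L) = 1.
    by field; rewrite h4.
  by rewrite scale1r.
Qed.
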